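(* For every $\delta>0$ and $p\in(0,1)$ there exists a constant $C=C(\delta,p)<\infty$ such that for all $n\ge1$ and $v\in[0,n]^2\cap\mathbb{Z}^2$, \[ \sum_{i\in\mathbb{N}}I_{v,i}(T_n)^2\le C\,\mathbb{P}(v\in\pi_n)^{2-\delta}. \]
   Context: $\mathbb{N}=\{0,1,2,\dots\}$. Let $(X_{u,j})_{u\in\mathbb{Z}^2,j\in\mathbb{N}}$ be i.i.d. Bernoulli($p$) and $\omega_u=\min\{j\ge0:X_{u,j}=1\}$ (i.i.d. geometric weights). $T_n$ is the maximum of $\sum_{x\in\gamma}\omega_x$ over up-right nearest-neighbour paths $\gamma$ from $(0,0)$ to $(n,n)$, viewed as a function of the bits $(X_{u,j})$; geodesics are maximizing paths and $\pi_n$ is the set of vertices lying on at least one geodesic. The influence of bit $(v,i)$ is $I_{v,i}(T_n)=\mathbb{E}\big[\big|\mathbb{E}[T_n\mid (X_{u,j})_{(u,j)\ne(v,i)}]-T_n\big|\big]$. *)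

(* Defs.v *)
From HB Require Import structures.
From mathcomp Require Import all_boot all_order all_algebra.
From mathcomp Require Import all_classical all_reals all_analysis.
Set Implicit Arguments. Unset Strict Implicit. Unset Printing Implicit Defensive.
Import Order.TTheory GRing.Theory Num.Theory.
Local Open Scope classical_set_scope.
Local Open Scope ring_scope.

(* A configuration of bits: x u j = X_{u,j}, u in Z^2, j in N. *)
Definition vtx := (int * int)%type.
Definition config := vtx -> nat -> bool.

(* omega_u = min {j >= 0 : X_{u,j} = 1}; on the (null) event that no such j
   exists we use the convention 0. *)
Definition omega (x : config) (u : vtx) : nat :=
  match pselect (exists j, x u j) with
  | left h => ex_minn h
  | right _ => 0%N
  end.

(* Vertices visited by the up-right path from (0,0) encoded by steps s
   (true = right step (+1,0), false = up step (0,+1)). *)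
Fixpoint path_from (a : vtx) (s : seq bool) : seq vtx :=
  match s with
  | [::] => [:: a]
  | b :: s' => a :: path_from (if b then (a.1 + 1, a.2) else (a.1, a.2 + 1)) s'
  end.
Definition path_vertices (s : seq bool) : seq vtx := path_from (0, 0) s.

(* up-right paths from (0,0) to (n,n): 2n steps, exactly n of them right. *)
Definition is_path (n : nat) (s : (2 * n).-tuple bool) : bool := count id s == n.

Definition path_weight (x : config) (s : seq bool) : nat :=
  (\sum_(u <- path_vertices s) omega x u)%N.

Definition T_n (n : nat) (x : config) : nat :=
  (\max_(s : (2 * n).-tuple bool | is_path s) path_weight x s)%N.

Definition geodesic (n : nat) (x : config) (s : (2 * n).-tuple bool) : Prop :=
  is_path s /\ path_weight x s = T_n n x.

Definition in_pi (n : nat) (x : config) (v : vtx) : Prop :=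
  exists s : (2 * n).-tuple bool, geodesic x s /\ v \in path_vertices s.

Definition upd (x : config) (v : vtx) (i : nat) (b : bool) : config :=
  fun u j => if (u == v) && (j == i)%N then b else x u j.

Definition iid_bernoulli {d} {T : measurableType d} {R : realType}
  (P : probability T R) (p : R) (X : T -> config) : Prop :=
  (forall u j, measurable [set w | X w u j]) /\
  (forall (F : seq (vtx * nat)) (b : vtx * nat -> bool), uniq F ->
     P [set w | forall k, k \in F -> X w k.1 k.2 = b k] =
     (\prod_(k <- F) (if b k then p else 1 - p))%:E).

(* Influence of bit (v,i) on T_n:
   E | E[T_n | all other bits] - T_n |, where, the bits being independent,
   E[T_n | (X_{u,j})_{(u,j) <> (v,i)}] = p T_n(X^{(v,i)->1}) + (1-p) T_n(X^{(v,i)->0}). *)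
Definition influence {d} {T : measurableType d} {R : realType}
  (P : probability T R) (p : R) (X : T -> config) (n : nat) (v : vtx) (i : nat)
  : \bar R :=
  (\int[P]_w
     (`| p * (T_n n (upd (X w) v i true))%:R
         + (1 - p) * (T_n n (upd (X w) v i false))%:R
         - (T_n n (X w))%:R |)%:E)%E.

Definition pi_event {d} {T : measurableType d} (X : T -> config) (n : nat) (v : vtx)
  : set T := [set w | in_pi n (X w) v].

(* Main.v *)
Require Import Defs.
From HB Require Import structures.
From mathcomp Require Import all_boot all_order all_algebra.
From mathcomp Require Import all_classical all_reals all_analysis.
From mathcomp Require Import zify ring lra measurable_realfun.
Import Order.TTheory GRing.Theory Num.Theory.
Local Open Scope classical_set_scope.
Local Open Scope ring_scope.

Definition om (f : nat -> bool) : nat :=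
  match pselect (exists j, f j) with left h => ex_minn h | right _ => 0%N end.

Lemma omegaE x u : omega x u = om (x u). Proof. by []. Qed.

Lemma om_some (f : nat -> bool) (h : exists j, f j) : f (om f) /\ forall j, f j -> (om f <= j)%N.
Proof.
rewrite /om; case: pselect => [h'|//]; by case: ex_minnP.
Qed.

Lemma om_none (f : nat -> bool) : ~ (exists j, f j) -> om f = 0%N.
Proof. by rewrite /om; case: pselect. Qed.

Lemma om_low (f : nat -> bool) k j : (0 < k)%N -> (k <= om f)%N -> (j < k)%N -> f j = false.
Proof.
move=> k0 kf jk; apply/negP => fj.
have [_ /(_ j fj)] := om_some _ (ex_intro _ j fj).
lia.
Qed.

Lemma om_le (f g : nat -> bool) : (forall j, f j -> g j) -> (exists j, f j) -> (om g <= om f)%N.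
Proof.
move=> fg [j fj]; have [f1 _] := om_some _ (ex_intro _ j fj).
have gh : exists j, g j by exists (om f); exact: fg.
by have [_ ] := om_some _ gh; apply; apply: fg.
Qed.

Definition setb (f : nat -> bool) (i : nat) (b : bool) : nat -> bool :=
  fun j => if (j == i)%N then b else f j.

Lemma om_set1 f i : (om (setb f i true) <= i)%N.
Proof.
have h : exists j, setb f i true j by exists i; rewrite /setb eqxx.
by have [_ ] := om_some _ h; apply; rewrite /setb eqxx.
Qed.

Lemma om_set10 f i : om (setb f i true) = i \/ om (setb f i false) = om (setb f i true).
Proof.
have h : exists j, setb f i true j by exists i; rewrite /setb eqxx.
have [h1 h2] := om_some _ h.
have := om_set1 f i; rewrite leq_eqVlt => /orP[/eqP->|lt]; [by left|right].
have e : setb f i false (om (setb f i true)).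
  by move: h1; rewrite /setb (ltn_eqF lt).
apply/eqP; rewrite eqn_leq; apply/andP; split.
  have [_ ] := om_some _ (ex_intro (fun j => setb f i false j) _ e); by apply.
apply: om_le; last by exists (om (setb f i true)).
by move=> j; rewrite /setb; case: (j == i)%N.
Qed.

Lemma om_set01 f i : (exists j, setb f i false j) ->
  (om (setb f i true) <= om (setb f i false))%N.
Proof. by apply: om_le => j; rewrite /setb; case: (j == i)%N. Qed.

Lemma upd_row x v i b : upd x v i b v = setb (x v) i b.
Proof. by apply/funext => j; rewrite /upd /setb eqxx. Qed.

Lemma upd_other x v i b u : u != v -> upd x v i b u = x u.
Proof. by move=> uv; apply/funext => j; rewrite /upd (negbTE uv). Qed.

Lemma upd_id x v i : upd x v i (x v i) = x.
Proof.
apply/funext => u; apply/funext => j; rewrite /upd.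
by case: eqP => [->|//]; case: eqP => [->|].
Qed.

Set Implicit Arguments. Unset Strict Implicit.

Lemma pf_ge (s : seq bool) (a u : vtx) : u \in path_from a s -> a.1 + a.2 <= u.1 + u.2.
Proof.
elim: s a => [|b s IH] a /=; first by rewrite inE => /eqP->.
rewrite inE => /orP[/eqP->//|/IH]; case: b => /=; lia.
Qed.

Lemma pf_uniq (s : seq bool) (a : vtx) : uniq (path_from a s).
Proof.
elim: s a => [|b s IH] a //=; rewrite IH andbT; apply/negP => /pf_ge.
case: b => /=; lia.
Qed.

Lemma sum_cmp (y z : config) v (r : seq vtx) :
  (forall u, u != v -> omega y u = omega z u) ->
  (\sum_(u <- r) omega y u <= \sum_(u <- r) omega z u + count_mem v r * (omega y v - omega z v))%N.
Proof.
move=> h; elim: r => [|u r IH]; first by rewrite !big_nil.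
rewrite !big_cons /=; case: (eqVneq u v) => [->|uv].
  rewrite /= ?eqxx /= mulnDl mul1n; move: IH; set m := (count_mem v r * _)%N; lia.
rewrite (h u uv) /= add0n; move: IH; set m := (count_mem v r * _)%N; lia.
Qed.

Lemma sum_eq (y z : config) v (r : seq vtx) :
  (forall u, u != v -> omega y u = omega z u) -> v \notin r ->
  (\sum_(u <- r) omega y u = \sum_(u <- r) omega z u)%N.
Proof.
move=> h vr; apply: eq_big_seq => u ur; apply: h.
by apply/eqP => e; move: vr; rewrite -e ur.
Qed.

Lemma T_ge n x (s : (2 * n).-tuple bool) : is_path s -> (path_weight x s <= T_n n x)%N.
Proof. by move=> ps; rewrite /T_n; exact: (@leq_bigmax_cond _ (fun s : (2 * n).-tuple bool => is_path s) (fun s : (2 * n).-tuple bool => path_weight x s) s ps). Qed.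

Lemma T_arg n x : (exists s : (2 * n).-tuple bool, is_path s) ->
  exists s : (2 * n).-tuple bool, is_path s /\ path_weight x s = T_n n x.
Proof.
case=> s0 ps0.
have := @bigop.bigmax_eq_arg _ s0 (fun s : (2*n).-tuple bool => is_path s) (fun s : (2*n).-tuple bool => path_weight x s) ps0.
case: arg_maxnP => // s ps _ e; exists s; split => //; by rewrite /T_n e.
Qed.

Lemma T_nopath n x : ~ (exists s : (2 * n).-tuple bool, is_path s) -> T_n n x = 0%N.
Proof.
move=> h; rewrite /T_n big1 // => s ps; exfalso; apply: h; by exists s.
Qed.

Lemma Tcomp1 n (y z : config) v : (forall u, u != v -> omega y u = omega z u) ->
  (T_n n y <= T_n n z + (omega y v - omega z v))%N.
Proof.
move=> h; have [ex|nex] := pselect (exists s : (2 * n).-tuple bool, is_path s); last first.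
  by rewrite T_nopath.
have [s [ps <-]] := T_arg y ex.
apply: (leq_trans (sum_cmp _ h)).
have c1 : (count_mem v (path_vertices s) <= 1)%N.
  by rewrite count_uniq_mem ?pf_uniq //; case: (_ \in _).
have := T_ge z ps; rewrite /path_weight => hz.
have : (count_mem v (path_vertices s) * (omega y v - omega z v) <= omega y v - omega z v)%N.
  by rewrite -[X in (_ <= X)%N]mul1n leq_mul2r c1 orbT.
lia.
Qed.

Lemma Tcomp2 n (y z : config) v : (forall u, u != v -> omega y u = omega z u) ->
  ~ in_pi n y v -> (T_n n y <= T_n n z)%N.
Proof.
move=> h npi; have [ex|nex] := pselect (exists s : (2 * n).-tuple bool, is_path s); last first.
  by rewrite T_nopath.
have [s [ps e]] := T_arg y ex.
have vs : v \notin path_vertices s.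
  apply/negP => vs; apply: npi; exists s; split => //.
rewrite -e /path_weight (sum_eq h vs); exact: T_ge.
Qed.

Lemma omega_upd_other x v i b u : u != v -> omega (upd x v i b) u = omega x u.
Proof. by move=> uv; rewrite !omegaE upd_other. Qed.

Lemma omega_upd_v x v i b : omega (upd x v i b) v = om (setb (x v) i b).
Proof. by rewrite omegaE upd_row. Qed.

Lemma omega_upd_upd x v i b c u : u != v ->
  omega (upd x v i b) u = omega (upd x v i c) u.
Proof. by move=> uv; rewrite !omega_upd_other. Qed.

Section Diff.
Variables (n : nat) (x : config) (v : vtx) (i : nat).
Let x0 := upd x v i false.
Let x1 := upd x v i true.

Lemma L01a : (T_n n x0 - T_n n x1 <= omega x0 v - i)%N.
Proof.
have := Tcomp1 n (y := x0) (z := x1) (v := v) (fun u uv => omega_upd_upd x i false true uv).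
rewrite /x0 /x1 !omega_upd_v.
case: (om_set10 (x v) i) => [->|->]; lia.
Qed.

Lemma L01b : ~ in_pi n x0 v -> (T_n n x0 - T_n n x1 = 0)%N.
Proof.
move=> np; have := Tcomp2 (y := x0) (z := x1) (v := v) (fun u uv => omega_upd_upd x i false true uv) np.
lia.
Qed.

Lemma L10 : (exists j, x0 v j) -> (T_n n x1 - T_n n x0 = 0)%N.
Proof.
move=> ex; have := Tcomp1 n (y := x1) (z := x0) (v := v) (fun u uv => omega_upd_upd x i true false uv).
rewrite /x0 /x1 !omega_upd_v.
have ex' : exists j, setb (x v) i false j by move: ex; rewrite /x0 upd_row.
have := om_set01 (x v) i ex'.
lia.
Qed.

Lemma L10b : (T_n n x1 - T_n n x0 <= i)%N.
Proof.
have := Tcomp1 n (y := x1) (z := x0) (v := v) (fun u uv => omega_upd_upd x i true false uv).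
rewrite /x0 /x1 !omega_upd_v.
have := om_set1 (x v) i; lia.
Qed.

Definition Aset (k : nat) : set config :=
  [set y | (k <= omega (upd y v i false) v)%N /\ in_pi n (upd y v i false) v] `|`
  [set y | forall j, ~~ upd y v i false v j].

Lemma in_Aset j : (j < (T_n n x0 - T_n n x1) + (T_n n x1 - T_n n x0))%N -> Aset (i.+1 + j) x.
Proof.
move=> hj.
have [ex|nex] := pselect (exists j, x0 v j); last first.
  by right => j'; apply/negP => h; apply: nex; exists j'.
left; move: hj; rewrite (L10 ex) addn0.
have [pi|npi] := pselect (in_pi n x0 v); last by rewrite (L01b npi).
have := L01a => H; split => //; move: H hj; rewrite /x0; move: (T_n _ _ - _)%N (omega _ v) => a o; lia.
Qed.

End Diff.

Lemma absB_nat (R : realType) (a b : nat) : `|a%:R - b%:R : R| = ((a - b) + (b - a))%N%:R.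
Proof.
case: (leqP a b) => ab.
  have -> : (a - b = 0)%N by apply/eqP; rewrite subn_eq0.
  rewrite add0n (natrB _ ab) distrC ger0_norm. reflexivity.
  rewrite subr_ge0 ler_nat. exact ab.
have ba := ltnW ab.
have -> : (b - a = 0)%N by apply/eqP; rewrite subn_eq0.
rewrite addn0 (natrB _ ba) ger0_norm. reflexivity.
rewrite subr_ge0 ler_nat. exact ba.
Qed.

Lemma D_le (R : realType) (p : R) n x v i : 0 <= p -> p <= 1 ->
  `| p * (T_n n (upd x v i true))%:R + (1 - p) * (T_n n (upd x v i false))%:R
     - (T_n n x)%:R | <=
  ((T_n n (upd x v i false) - T_n n (upd x v i true)) +
   (T_n n (upd x v i true) - T_n n (upd x v i false)))%N%:R.
Proof.
move=> p0 p1.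
rewrite -absB_nat.
have e : T_n n x = T_n n (upd x v i (x v i)) by rewrite upd_id.
set t0 := (T_n n (upd x v i false))%:R : R.
set t1 := (T_n n (upd x v i true))%:R : R.
have q0 : 0 <= 1 - p by rewrite subr_ge0.
have q1 : 1 - p <= 1 by rewrite lerBlDr lerDl.
case: (x v i) e => -> .
  have -> : p * t1 + (1 - p) * t0 - t1 = (1 - p) * (t0 - t1) by ring.
  rewrite normrM (ger0_norm q0).
  apply: ler_piMl. exact: normr_ge0. exact: q1.
have -> : p * t1 + (1 - p) * t0 - t0 = p * - (t0 - t1) by ring.
rewrite normrM normrN (ger0_norm p0).
apply: ler_piMl. exact: normr_ge0. exact: p1.
Qed.

Section Meas.
Context d (T : measurableType d).

Definition nmeas (f : T -> nat) := forall k, measurable [set w | f w = k].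

Lemma nmeasP (f : T -> nat) (P : nat -> Prop) : nmeas f -> measurable [set w | P (f w)].
Proof.
move=> hf.
have -> : [set w | P (f w)] = \bigcup_(k in P) [set w | f w = k].
  apply/seteqP; split => w /=; [by move=> Pw; exists (f w)|by case=> k Pk e; rewrite e].
by apply: bigcup_measurable => k _; exact: hf.
Qed.

Lemma nmeasP2 (f g : T -> nat) (P : nat -> nat -> Prop) : nmeas f -> nmeas g ->
  measurable [set w | P (f w) (g w)].
Proof.
move=> hf hg.
have -> : [set w | P (f w) (g w)] =
   \bigcup_(k in setT) ([set w | f w = k] `&` [set w | P k (g w)]).
  apply/seteqP; split => w /=; first by move=> Pw; exists (f w) => //.
  by case=> k _ [<-].
apply: bigcup_measurable => k _; apply: measurableI; first exact: hf.
exact: nmeasP.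
Qed.

Lemma nmeas_op (f g : T -> nat) (op : nat -> nat -> nat) : nmeas f -> nmeas g ->
  nmeas (fun w => op (f w) (g w)).
Proof. by move=> hf hg k; exact: (nmeasP2 (fun a b => op a b = k) hf hg). Qed.

Lemma nmeas_cst c : nmeas (fun _ => c).
Proof.
move=> k; have [->|ck] := eqVneq c k.
  have -> : [set w : T | k = k] = setT by apply/seteqP; split.
  exact: measurableT.
have -> : [set w : T | c = k] = set0 by apply/seteqP; split => // w /= e; move: ck; rewrite e eqxx.
exact: measurable0.
Qed.

Lemma nmeas_big (I : Type) (r : seq I) (P : pred I) (F : I -> T -> nat) op idx :
  (forall i, nmeas (F i)) -> nmeas (fun w => \big[op/idx]_(i <- r | P i) F i w).
Proof.
move=> hF; elim: r => [|i r IH].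
  under eq_fun do rewrite big_nil; exact: nmeas_cst.
under eq_fun do rewrite big_cons.
case: (P i); last exact: IH.
exact: nmeas_op.
Qed.

Lemma meas_exists_seq (I : eqType) (r : seq I) (Q : I -> set T) :
  (forall i, measurable (Q i)) -> measurable [set w | exists i, i \in r /\ Q i w].
Proof.
move=> hQ; elim: r => [|i r IH].
  have -> : [set w | exists i0, i0 \in [::] /\ Q i0 w] = set0.
    by apply/seteqP; split => // w /= [j []].
  exact: measurable0.
have -> : [set w | exists i0, i0 \in i :: r /\ Q i0 w] =
   Q i `|` [set w | exists i0, i0 \in r /\ Q i0 w].
  apply/seteqP; split => w /=.
    case=> j []; rewrite inE => /orP[/eqP->|jr] Qj; [by left|by right; exists j].
  case=> [Qi|[j [jr Qj]]]; first by exists i; rewrite inE eqxx.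
  by exists j; rewrite inE jr orbT.
exact: measurableU.
Qed.

Lemma meas_exists_fin (I : finType) (Q : I -> set T) :
  (forall i, measurable (Q i)) -> measurable [set w | exists i, Q i w].
Proof.
move=> hQ; have -> : [set w | exists i, Q i w] = [set w | exists i, i \in enum I /\ Q i w].
  by apply/seteqP; split => w /= [i]; [move=> Qi; exists i; rewrite mem_enum | case=> _ Qi; exists i].
exact: meas_exists_seq.
Qed.

Variable Y : T -> config.
Hypothesis hY : forall u j, measurable [set w | Y w u j].

Lemma mYb u j b : measurable [set w | Y w u j = b].
Proof.
case: b.
  have -> : [set w | Y w u j = true] = [set w | Y w u j] by [].
  exact: hY.
have -> : [set w | Y w u j = false] = ~` [set w | Y w u j].
  by apply/seteqP; split => w /=; [move=> ->|move/negP/negbTE].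
exact/measurableC/hY.
Qed.

Lemma mfin (F : seq (vtx * nat)) (b : vtx * nat -> bool) :
  measurable [set w | forall k, k \in F -> Y w k.1 k.2 = b k].
Proof.
elim: F => [|k F IH].
  have -> : [set w | forall k, k \in [::] -> Y w k.1 k.2 = b k] = setT.
    by apply/seteqP; split => // w _ k.
  exact: measurableT.
have -> : [set w | forall k0, k0 \in k :: F -> Y w k0.1 k0.2 = b k0] =
   [set w | Y w k.1 k.2 = b k] `&` [set w | forall k, k \in F -> Y w k.1 k.2 = b k].
  apply/seteqP; split => w /=.
    by move=> h; split; [apply: h; rewrite inE eqxx|move=> k' kF; apply: h; rewrite inE kF orbT].
  by case=> h1 h2 k'; rewrite inE => /orP[/eqP->|/h2].
apply: measurableI => //; exact: mYb.
Qed.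

Lemma m_below u m : measurable [set w | forall j, (j < m)%N -> Y w u j = false].
Proof.
elim: m => [|m IH].
  have -> : [set w | forall j, (j < 0)%N -> Y w u j = false] = setT by apply/seteqP; split.
  exact: measurableT.
have -> : [set w | forall j, (j < m.+1)%N -> Y w u j = false] =
  [set w | forall j, (j < m)%N -> Y w u j = false] `&` [set w | Y w u m = false].
  apply/seteqP; split => w /=.
    by move=> h; split; [move=> j jm; apply: h; rewrite ltnS ltnW|apply: h].
  case=> h1 h2 j; rewrite ltnS leq_eqVlt => /orP[/eqP->//|]; exact: h1.
apply: measurableI => //; exact: mYb.
Qed.

Lemma m_none u : measurable [set w | forall j, ~~ Y w u j].
Proof.
have -> : [set w | forall j, ~~ Y w u j] = \bigcap_j [set w | Y w u j = false].
  by apply/seteqP; split => w /=; [move=> h j _; apply/negbTE|move=> h j; rewrite h].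
apply: bigcapT_measurable => j; exact: mYb.
Qed.

Lemma om_eqE (f : nat -> bool) m : om f = m <->
  ((f m /\ forall j, (j < m)%N -> f j = false) \/ (m = 0%N /\ forall j, ~~ f j)).
Proof.
have [ex|nex] := pselect (exists j, f j).
  have [h1 h2] := om_some f ex; split.
    move=> <-; left; split => // j jm; apply/negbTE/negP => fj.
    by have := h2 j fj; rewrite leqNgt jm.
  case=> [[fm hm]|[_ hn]]; last by case: ex => j; rewrite (negbTE (hn j)).
  apply/eqP; rewrite eqn_leq h2 //=; rewrite leqNgt; apply/negP => lt.
  by move: (hm _ lt); rewrite h1.
rewrite om_none //; split.
  move=> <-; right; split => // j; apply/negP => fj; apply: nex; by exists j.
by case=> [[fm _]|[-> _]] //; exfalso; apply: nex; exists m.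
Qed.

Lemma nmeas_omega u : nmeas (fun w => omega (Y w) u).
Proof.
move=> m.
have -> : [set w | omega (Y w) u = m] =
   ([set w | Y w u m = true] `&` [set w | forall j, (j < m)%N -> Y w u j = false]) `|`
   ([set w | m = 0%N] `&` [set w | forall j, ~~ Y w u j]).
  apply/seteqP; split => w /=; rewrite omegaE om_eqE; by case=> [[]|[]]; [left|right].
apply: measurableU; apply: measurableI.
- exact: mYb.
- exact: m_below.
- exact: (nmeasP (fun z => m = z) (nmeas_cst 0)).
- exact: m_none.
Qed.

Lemma nmeas_pw (s : seq bool) : nmeas (fun w => path_weight (Y w) s).
Proof. rewrite /path_weight; apply: nmeas_big => u; exact: nmeas_omega. Qed.

Lemma nmeas_T n : nmeas (fun w => T_n n (Y w)).
Proof. rewrite /T_n; apply: nmeas_big => s; exact: nmeas_pw. Qed.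

Lemma meas_pi n v : measurable [set w | in_pi n (Y w) v].
Proof.
have -> : [set w | in_pi n (Y w) v] =
  [set w | exists s : (2 * n).-tuple bool,
     (fun s => if is_path s && (v \in path_vertices s) then
        [set w | path_weight (Y w) s = T_n n (Y w)] else set0) s w].
  apply/seteqP; split => w /=.
    by case=> s [[ps e] vs]; exists s; rewrite ps vs.
  case=> s; case: ifP => // /andP[ps vs] e; exists s; split => //.
apply: meas_exists_fin => s; case: ifP => _; last exact: measurable0.
exact: (nmeasP2 (fun a b => a = b) (nmeas_pw s) (nmeas_T n)).
Qed.

End Meas.

Section Indep.
Context d (T : measurableType d) (R : realType) (P : probability T R) (p : R) (X : T -> config).
Hypothesis hX : iid_bernoulli P p X.
Variables (v : vtx) (i : nat).

Definition cyl (F : seq (vtx * nat)) (b : vtx * nat -> bool) : set T :=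
  [set w | forall k, k \in F -> X w k.1 k.2 = b k].

Lemma cyl_undup F b : cyl (undup F) b = cyl F b.
Proof. by apply/seteqP; split => w /= h k kF; apply: h; rewrite ?mem_undup in kF *. Qed.

Lemma P_cyl F b : P (cyl F b) = (\prod_(k <- undup F) (if b k then p else 1 - p))%:E.
Proof. by rewrite -cyl_undup; apply: hX.2; exact: undup_uniq. Qed.

Lemma cyl_meas F b : measurable (cyl F b).
Proof. exact: (mfin hX.1). Qed.

Definition Gfam : set (set T) := [set A | A = set0 \/
  exists F b, (v, i) \notin F /\ A = cyl F b].

Definition B0 := [set w | X w v i = false].

Definition Hfam : set (set T) := [set A | measurable A /\
  P (A `&` B0) = ((1 - p)%:E * P A)%E].

Lemma G_H : Gfam `<=` Hfam.
Proof.
move=> A [->|[F [b [vF ->]]]].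
  by split; [exact: measurable0|rewrite set0I measure0 mule0].
split; first exact: cyl_meas.
have -> : cyl F b `&` B0 = cyl ((v, i) :: F) (fun k => if k == (v, i) then false else b k).
  apply/seteqP; split => w /=.
    case=> h h0 k; rewrite inE => /orP[/eqP->|kF]; first by rewrite eqxx.
    have -> : (k == (v, i)) = false by apply/negbTE/eqP => e; move: vF; rewrite -e kF.
    exact: h.
  move=> h; split; last by have := h (v, i); rewrite inE ?eqxx /= ?eqxx; apply.
  move=> k kF; have := h k; rewrite inE kF orbT => /(_ isT).
  have -> // : (k == (v, i)) = false by apply/negbTE/eqP => e; move: vF; rewrite -e kF.
rewrite !P_cyl /= (negbTE vF).
rewrite big_cons eqxx -EFinM; congr (_%:E); congr (_ * _).
apply: eq_big_seq => k; rewrite mem_undup => kF.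
have -> // : (k == (v, i)) = false by apply/negbTE/eqP => e; move: vF; rewrite -e kF.
Qed.

Lemma Gfam_setI : setI_closed Gfam.
Proof.
move=> A B [->|[F1 [b1 [vF1 ->]]]]; first by move=> _; left; rewrite set0I.
move=> [->|[F2 [b2 [vF2 ->]]]]; first by left; rewrite setI0.
have [[k [k1 [k2 bk]]]|nc] := pselect (exists k, k \in F1 /\ k \in F2 /\ b1 k <> b2 k).
  left; apply/seteqP; split => // w /= [h1 h2]; apply: bk.
  by rewrite -(h1 k k1) -(h2 k k2).
right; exists (F1 ++ F2), (fun k => if k \in F1 then b1 k else b2 k); split.
  by rewrite mem_cat negb_or vF1 vF2.
apply/seteqP; split => w /=.
  case=> h1 h2 k; rewrite mem_cat; case: ifP => kF1 /=; first by move=> _; exact: h1.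
  exact: h2.
move=> h; split => k kF.
  by have := h k; rewrite mem_cat kF /=; apply.
have := h k; rewrite mem_cat kF orbT => /(_ isT); case: ifP => // kF1 ->.
apply: contrapT => ne; apply: nc; exists k; split => //; split => //.
Qed.

Lemma PB0 : P B0 = (1 - p)%:E.
Proof.
have -> : B0 = cyl [:: (v, i)] (fun _ => false).
  apply/seteqP; split => w /=; first by move=> h k; rewrite inE => /eqP->.
  by move=> h; apply: (h (v, i)); rewrite inE.
by rewrite P_cyl /= big_cons big_nil mulr1.
Qed.

Lemma B0_meas : measurable B0.
Proof. exact: (mYb hX.1). Qed.

Lemma H_dynkin : dynkin Hfam.
Proof.
split.
- split; first exact: measurableT.
  by rewrite setTI PB0 probability_setT mule1.
- move=> A [mA hA]; split; first exact: measurableC.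
  have -> : ~` A `&` B0 = B0 `\` A by rewrite setDE setIC.
  have hD : P (B0 `\` A) = (P B0 - P (B0 `&` A))%E.
    apply: measureD; [exact: B0_meas|exact: mA|].
    by apply: (le_lt_trans (probability_le1 P B0_meas)); rewrite ltey.
  have hC : P (~` A) = (1 - P A)%E := probability_setC P mA.
  rewrite hD hC (setIC B0 A) hA PB0.
  have fA : P A \is a fin_num by rewrite fin_num_measure.
  rewrite -(fineK fA) -!EFinM -!EFinB; congr (_%:E); ring.
- move=> F tF hF; split.
    by apply: bigcup_measurable => k _; exact: (hF k).1.
  rewrite setI_bigcupl measure_bigcup; last first.
  + exact: trivIset_setIr.
  + by move=> k _; apply: measurableI; [exact: (hF k).1|exact: B0_meas].
  rewrite measure_bigcup; last first.
  + exact: tF.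
  + by move=> k _; exact: (hF k).1.
  rewrite -nneseriesZl; last by move=> k _; exact: measure_ge0.
  by apply: eq_eseriesr => k _; exact: (hF k).2.
Qed.

Lemma indep_B0 A : <<s Gfam >> A -> P (A `&` B0) = ((1 - p)%:E * P A)%E.
Proof.
move=> hA.
have : <<s Gfam >> `<=` Hfam.
  apply: (lambda_system_subset Gfam_setI) => //.
  - exact/dynkin_lambda_system/H_dynkin.
  - exact: G_H.
by move=> /(_ _ hA) [].
Qed.

Lemma G_meas : <<s Gfam >> `<=` measurable.
Proof.
apply: smallest_sub; first exact: sigma_algebra_measurable.
move=> A [->|[F [b [_ ->]]]]; [exact: measurable0|exact: cyl_meas].
Qed.

End Indep.

Lemma le_pow0 (R : realType) (x a : R) : 0 <= a < 1 -> (forall m, x <= a ^+ m) -> x <= 0.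
Proof.
move=> /andP[a0 a1] h.
have ha : `|a| < 1 by rewrite ger0_norm.
apply: (cvgr_to_ge (cvg_expr ha)); exact: nearW.
Qed.

Lemma geo_partial (R : realType) (r : R) N : 0 <= r < 1 ->
  \sum_(j < N) r ^+ j <= (1 - r)^-1.
Proof.
move=> /andP[r0 r1].
have e : (\sum_(j < N) r ^+ j) * (1 - r) = 1 - r ^+ N.
  elim: N => [|N IH]; first by rewrite big_ord0 expr0 mul0r subrr.
  by rewrite big_ord_recr /= mulrDl IH exprSr; ring.
have r1' : 0 < 1 - r by rewrite subr_gt0.
rewrite -(ler_pM2r r1') mulVf ?gt_eqF // e.
rewrite lerBlDr lerDl; exact: exprn_ge0.
Qed.

Section ESeries.
Local Open Scope ereal_scope.

Lemma eser_le (R : realType) (u : nat -> \bar R) (c : R) : (forall j, 0 <= u j) ->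
  (forall N, \sum_(0 <= j < N) u j <= c%:E) -> \sum_(0 <= j <oo) u j <= c%:E.
Proof.
move=> u0 h; apply: lime_le.
  by apply: is_cvg_nneseries => j _ _; exact: u0.
exact: nearW.
Qed.

Lemma ser_ge_count (R : realType) (u : nat -> \bar R) (m : nat) : (forall j, 0 <= u j) ->
  (forall j, (j < m)%N -> u j = 1) -> (m%:R)%:E <= \sum_(0 <= j <oo) u j.
Proof.
move=> u0 h; apply: le_trans (nneseries_lim_ge m _); last by move=> j _ _; exact: u0.
rewrite big_mkord (eq_bigr (fun _ => 1)); last by move=> j _; exact: h.
by rewrite sumEFin sumr_const card_ord.
Qed.

Lemma geo_eser (R : realType) (u : nat -> \bar R) (c r : R) : (0 <= c)%R -> (0 <= r < 1)%R ->
  (forall j, 0 <= u j) -> (forall j, u j <= (c * r ^+ j)%:E) ->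
  \sum_(0 <= j <oo) u j <= (c / (1 - r))%:E.
Proof.
move=> c0 hr u0 hu; apply: eser_le => // N.
apply: (le_trans (y := \sum_(0 <= j < N) (c * r ^+ j)%:E)).
  by apply: lee_sum => j _; exact: hu.
rewrite sumEFin lee_fin big_mkord -mulr_sumr.
by apply: ler_wpM2l => //; exact: geo_partial.
Qed.

End ESeries.

Lemma geo_mean (R : realType) (x s t th : R) : 0 <= s -> 0 <= t -> 0 <= th <= 1 ->
  x <= s -> x <= t -> x <= s `^ th * t `^ (1 - th).
Proof.
move=> s0 t0 /andP[th0 th1] xs xt.
have d1 : (th + (1 - th) == 0) ==> (s != 0) by rewrite addrC subrK oner_eq0.
have d2 : (th + (1 - th) == 0) ==> (t != 0) by rewrite addrC subrK oner_eq0.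
have th1' : 0 <= 1 - th by rewrite subr_ge0.
have nn : forall z : R, 0 <= z -> z \in Num.nneg by move=> z z0; rewrite nnegrE.
case: (leP s t) => st.
  have es : s `^ th * s `^ (1 - th) = s.
    rewrite -powRD // (addrC th) subrK; exact: (powRr1 s0).
  apply: (le_trans xs); rewrite -{1}es; apply: ler_wpM2l; first exact: powR_ge0.
  exact: (ge0_ler_powR th1' (nn _ s0) (nn _ t0) st).
have et : t `^ th * t `^ (1 - th) = t.
  rewrite -powRD // (addrC th) subrK; exact: (powRr1 t0).
apply: (le_trans xt); rewrite -{1}et; apply: ler_wpM2r; first exact: powR_ge0.
exact: (ge0_ler_powR th0 (nn _ t0) (nn _ s0) (ltW st)).
Qed.

Section NonMeas.
Local Open Scope ereal_scope.
Context d (T : measurableType d) (R : realType) (mu : {measure set T -> \bar R}).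

Lemma le_int_nonmeas (f g : T -> \bar R) : (forall x, 0 <= f x) -> (forall x, f x <= g x) ->
  \int[mu]_x f x <= \int[mu]_x g x.
Proof.
move=> f0 fg.
have g0 : forall x, 0 <= g x by move=> x; exact: le_trans (f0 x) (fg x).
rewrite !ge0_integralE //.
apply: le_ereal_sup => _ [h hf <-]; exists h => //= x.
apply: le_trans (hf x) _.
by rewrite /patch; case: ifP.
Qed.

End NonMeas.

Section Main.
Context d (T : measurableType d) (R : realType) (P : probability T R) (p : R) (X : T -> config).
Hypothesis hX : iid_bernoulli P p X.
Hypothesis p0 : 0 < p.
Hypothesis p1 : p < 1.
Variables (n : nat) (v : vtx).

Local Notation a := (1 - p).
Local Notation q := (fine (P (pi_event X n v))).

Lemma a0 : 0 < a. Proof. by rewrite subr_gt0. Qed.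
Lemma a1 : a < 1. Proof. by rewrite ltrBlDr ltrDl. Qed.

Lemma pi_meas : measurable (pi_event X n v).
Proof. exact: (meas_pi hX.1 n v). Qed.

Lemma Pfin (A : set T) : measurable A -> P A = (fine (P A))%:E.
Proof. by move=> mA; rewrite fineK // fin_num_measure. Qed.

Lemma Pq : P (pi_event X n v) = q%:E.
Proof. exact: (Pfin pi_meas). Qed.

Lemma q0 : 0 <= q.
Proof. by rewrite -lee_fin -Pq; exact: measure_ge0. Qed.

Lemma q1 : q <= 1.
Proof. by rewrite -lee_fin -Pq; exact: probability_le1 pi_meas. Qed.

Definition Zs (m : nat) := cyl X [seq (v, j) | j <- iota 0 m] (fun _ => false).

Lemma Zs_meas m : measurable (Zs m).
Proof. exact: (cyl_meas hX). Qed.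

Lemma PZs m : P (Zs m) = (a ^+ m)%:E.
Proof.
rewrite /Zs (P_cyl hX) undup_id; last first.
  by rewrite map_inj_uniq ?iota_uniq // => j k [].
have e : iota 0 m = index_iota 0 m by rewrite /index_iota subn0.
by rewrite big_map e prodr_const_nat subn0.
Qed.

Lemma inZs m w : (forall j, (j < m)%N -> X w v j = false) -> Zs m w.
Proof. by move=> h k /mapP [j]; rewrite mem_iota add0n => /andP[_ jm] ->; exact: h. Qed.

Definition Nv := [set w | forall j, ~~ X w v j].

Lemma Nv_meas : measurable Nv.
Proof. exact: (m_none hX.1 v). Qed.

Lemma PNv : P Nv = 0%E.
Proof.
have h : forall m, fine (P Nv) <= a ^+ m.
  move=> m; rewrite -lee_fin -(Pfin Nv_meas) -PZs.
  apply: le_measure; rewrite ?inE; [exact: Nv_meas|exact: Zs_meas|].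
  by move=> w hw; apply: inZs => j _; apply/negbTE.
have : fine (P Nv) <= 0.
  by apply: le_pow0 h; rewrite (ltW a0) a1.
rewrite (Pfin Nv_meas) => hle; apply/eqP; rewrite eq_le lee_fin hle /=.
by rewrite -(Pfin Nv_meas); exact: measure_ge0.
Qed.


Definition Aw (i k : nat) : set T := [set w | Aset n v i k (X w)].

Lemma AG i k : <<s Gfam X v i >> (Aw i k).
Proof.
pose T' := g_sigma_algebraType (Gfam X v i).
pose Y : T' -> config := fun w => upd (X w) v i false.
have hY : forall u j, measurable [set w : T' | Y w u j].
  move=> u j; case: (eqVneq (u, j) (v, i)) => [[-> ->]|ne].
    have -> : [set w : T' | Y w v i] = set0.
      by apply/seteqP; split => // w; rewrite /Y /upd !eqxx.
    exact: measurable0.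
  have -> : [set w : T' | Y w u j] = cyl X [:: (u, j)] (fun _ => true).
    have e : ((u == v) && (j == i)) = false.
      by apply/negbTE; apply: contra ne => /andP[/eqP-> /eqP->].
    apply/seteqP; split => w /=; rewrite /Y /upd e.
      by move=> h k0; rewrite inE => /eqP->.
    by move=> h; apply: (h (u, j)); rewrite inE.
  apply: sub_sigma_algebra; right; exists [:: (u, j)], (fun _ => true); split => //.
  by rewrite inE eq_sym.
have hm : measurable
   (([set w : T' | (k <= omega (Y w) v)%N] `&` [set w : T' | in_pi n (Y w) v]) `|`
    [set w : T' | forall j, ~~ Y w v j]).
  apply: measurableU; last exact: (m_none hY v).
  apply: measurableI; last exact: (meas_pi hY n v).
  exact: (nmeasP (fun z => (k <= z)%N) (nmeas_omega hY v)).
exact: hm.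
Qed.

Lemma Aw_meas i k : measurable (Aw i k).
Proof. apply: (G_meas hX); exact: (@AG i k). Qed.

Lemma sub_B0 i w : X w v i = false -> upd (X w) v i false = X w.
Proof. by move=> h; have := upd_id (X w) v i; rewrite h. Qed.

Lemma AB0_Z i k : (0 < k)%N -> Aw i k `&` B0 X v i `<=` Zs k.
Proof.
move=> k0 w [hA hB]; apply: inZs => j jk.
rewrite /Aw /Aset /= (sub_B0 hB) in hA.
case: hA => [[hk _]|hn]; first exact: (@om_low (X w v) k j k0 hk jk).
exact/negbTE.
Qed.

Lemma AB0_piN i k : Aw i k `&` B0 X v i `<=` pi_event X n v `|` Nv.
Proof.
move=> w [hA hB]; rewrite /Aw /Aset /= (sub_B0 hB) in hA.
by case: hA => [[_ hp]|hn]; [left|right].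
Qed.

Lemma PAB0 i k : P (Aw i k `&` B0 X v i) = (a * fine (P (Aw i k)))%:E.
Proof. by rewrite (indep_B0 hX (@AG i k)) EFinM -(Pfin (Aw_meas i k)). Qed.

Lemma AB0_meas i k : measurable (Aw i k `&` B0 X v i).
Proof. apply: measurableI; [exact: Aw_meas|exact: (B0_meas hX)]. Qed.

Lemma bound_a i k : (0 < k)%N -> a * fine (P (Aw i k)) <= a ^+ k.
Proof.
move=> k0; rewrite -lee_fin -PAB0 -PZs.
apply: le_measure; rewrite ?inE; [exact: AB0_meas|exact: Zs_meas|exact: AB0_Z].
Qed.

Lemma bound_q i k : a * fine (P (Aw i k)) <= q.
Proof.
rewrite -lee_fin -PAB0 -Pq.
have hU : (P (pi_event X n v `|` Nv) <= P (pi_event X n v) + P Nv)%E :=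
  measureU2 P pi_meas Nv_meas.
rewrite PNv adde0 in hU; apply: le_trans hU.
apply: le_measure; rewrite ?inE; [exact: AB0_meas| |exact: AB0_piN].
apply: measurableU; [exact: pi_meas|exact: Nv_meas].
Qed.


Variable th : R.
Hypothesis th0 : 0 < th.
Hypothesis th1 : th <= 1.

Lemma powR_expr (x : R) k : 0 <= x -> (x ^+ k) `^ th = (x `^ th) ^+ k.
Proof.
move=> x0; rewrite -(powR_mulrn k x0) -powRrM mulrC powRrM powR_mulrn //.
exact: powR_ge0.
Qed.

Lemma r_lt1 : a `^ th < 1.
Proof.
have h := gt0_ltr_powR th0.
have := h a 1; rewrite !nnegrE => /(_ (ltW a0) ler01 a1).
by rewrite powR1.
Qed.

Lemma bound_term i k : (0 < k)%N ->
  fine (P (Aw i k)) <= ((a `^ th) ^+ k * q `^ (1 - th)) / a.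
Proof.
move=> k0; rewrite ler_pdivlMr; last exact: a0.
rewrite [_ * a]mulrC -powR_expr; last exact: ltW a0.
apply: geo_mean.
- exact: exprn_ge0 (ltW a0).
- exact: q0.
- by rewrite (ltW th0) th1.
- exact: bound_a.
- exact: bound_q.
Qed.

Lemma infl_bound i :
  (influence P p X n v i <=
    ((q `^ (1 - th) / a * (a `^ th) ^+ i.+1) / (1 - a `^ th))%:E)%E.
Proof.
have r0 : 0 <= a `^ th by exact: powR_ge0.
have r1 := r_lt1.
apply: (@le_trans _ _ (\sum_(0 <= j <oo) P (Aw i (i.+1 + j)))%E).
  rewrite /influence.
  apply: le_trans; first apply: (@le_int_nonmeas _ _ _ P _ (fun w =>
      (\sum_(0 <= j <oo) (\1_(Aw i (i.+1 + j)) w)%:E)%E)).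
  - by move=> w; rewrite lee_fin; exact: normr_ge0.
  - move=> w.
    apply: le_trans; last apply: (ser_ge_count (m := ((T_n n (upd (X w) v i false) -
         T_n n (upd (X w) v i true)) + (T_n n (upd (X w) v i true) - T_n n (upd (X w) v i false)))%N)).
    + rewrite lee_fin; apply: D_le; [exact: ltW p0|exact: ltW p1].
    + by move=> j; rewrite lee_fin indicE ler0n.
    + move=> j hj; rewrite indicE mem_set //; exact: in_Aset.
  have mf : forall j, measurable_fun setT (EFin \o (\1_(Aw i (i.+1 + j)) : T -> R)).
    by move=> j; apply/measurable_EFinP/measurable_indic/Aw_meas.
  have f0 : forall j w, setT w -> (0 <= (\1_(Aw i (i.+1 + j)) w : R)%:E)%E.
    by move=> j w _; rewrite lee_fin indicE ler0n.
  rewrite (integral_nneseries P measurableT mf f0).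
  apply: lee_nneseries.
    by move=> j _ _; apply: integral_ge0 => w _; exact: f0.
  by move=> j _; rewrite integral_indic ?setIT //; exact: Aw_meas.
apply: geo_eser.
- apply: mulr_ge0; last exact: exprn_ge0.
  apply: divr_ge0; [exact: powR_ge0|exact: ltW a0].
- by rewrite r0 r1.
- by move=> j; exact: measure_ge0.
move=> j; rewrite (Pfin (Aw_meas i (i.+1 + j))) lee_fin.
have k0 : (0 < i.+1 + j)%N by rewrite addSn.
apply: (le_trans (bound_term i k0)).
rewrite le_eqVlt; apply/orP; left; apply/eqP; rewrite exprD; ring.
Qed.

End Main.

Unset Implicit Arguments. Set Strict Implicit.

Theorem lemma5p1 (R : realType) (delta p : R) :
  0 < delta -> 0 < p < 1 ->
  exists C : R,
    forall (d : measure_display) (T : measurableType d) (P : probability T R)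
           (X : T -> config),
      iid_bernoulli P p X ->
      forall (n : nat) (v : vtx),
        (1 <= n)%N ->
        0 <= v.1 <= n%:Z -> 0 <= v.2 <= n%:Z ->
        (\sum_(0 <= i <oo) (influence P p X n v i * influence P p X n v i)
           <= (C * fine (P (pi_event X n v)) `^ (2 - delta))%:E)%E.
Proof.
move=> dl /andP[p0 p1].
pose th := Num.min delta 1 / 2.
have m0 : 0 < Num.min delta 1 by rewrite lt_min dl ltr01.
have m1 : Num.min delta 1 <= 1 by rewrite ge_min lexx orbT.
have md : Num.min delta 1 <= delta by rewrite ge_min lexx.
have th0 : 0 < th by rewrite /th divr_gt0.
have th1 : th <= 1 by rewrite /th ler_pdivrMr // mul1r; apply: (le_trans m1); rewrite ler1n.
have th2 : 2 * th <= delta by rewrite /th mulrC divfK ?pnatr_eq0.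
have th3 : 2 * th <= 1 by rewrite /th mulrC divfK ?pnatr_eq0.
pose a := 1 - p.
have a0' : 0 < a by rewrite /a subr_gt0.
pose r := a `^ th.
have r0 : 0 <= r by exact: powR_ge0.
have r1 : r < 1 by exact: (r_lt1 p0 p1 th0).
have r2 : r ^+ 2 < 1 by rewrite expr2; nra.
pose K := r / (a * (1 - r)).
have K0 : 0 <= K.
  apply: divr_ge0 => //; apply: mulr_ge0; [exact: ltW|by rewrite subr_ge0 ltW].
pose C := K ^+ 2 / (1 - r ^+ 2).
have C0 : 0 <= C by apply: divr_ge0; [exact: exprn_ge0|by rewrite subr_ge0 ltW].
exists C => d T P X hX n v _ _ _.
set q := fine (P (pi_event X n v)).
have q0' : 0 <= q := q0 hX n v.
have q1' : q <= 1 := q1 hX n v.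
pose q' := q `^ (1 - th).
have q'0 : 0 <= q' by exact: powR_ge0.
have hb := infl_bound hX p0 p1 n v th0 th1.
have I0 : forall i, (0 <= influence P p X n v i)%E.
  by move=> i; apply: integral_ge0 => w _; rewrite lee_fin normr_ge0.
apply: le_trans.
  apply: (@geo_eser R (fun i => influence P p X n v i * influence P p X n v i)%E
            (q' ^+ 2 * K ^+ 2) (r ^+ 2)).
  - by apply: mulr_ge0; exact: exprn_ge0.
  - by rewrite exprn_ge0 //= r2.
  - by move=> i; apply: mule_ge0.
  move=> i; apply: le_trans; first by apply: lee_pmul; [exact: I0|exact: I0|exact: hb i|exact: hb i].
  rewrite -EFinM lee_fin le_eqVlt; apply/orP; left; apply/eqP.
  rewrite -/a -/r -/q -/q' /K exprS exprAC.
  have ha : a != 0 by rewrite gt_eqF.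
  have hr : 1 - r != 0 by rewrite subr_eq0 eq_sym lt_eqF.
  move: (r ^+ i) => t; field.
  by rewrite ha hr.
rewrite lee_fin.
have -> : q' ^+ 2 * K ^+ 2 / (1 - r ^+ 2) = C * q' ^+ 2 by rewrite /C; ring.
apply: ler_wpM2l => //.
have ne : (1 - th) + (1 - th) != 0 by apply/negP => /eqP h; lra.
rewrite expr2 /q' -powRD; last by rewrite (negbTE ne).
have [->|qn0] := eqVneq q 0.
  by rewrite powR0 //; exact: powR_ge0.
apply: ger_powR; last by lra.
by rewrite q1' andbT lt_neqAle eq_sym qn0 q0'.
Qed.
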